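(* Let $h_1,h_2$ be flow graphs over a flow monoid with $h_1.X=h_2.X$ and $h_1.\mathit{in}=h_2.\mathit{in}$. If $Z\in\mathrm{FP}(h_1,h_2)$ and $Z\subseteq Y\subseteq h_1.X$, then $Y\in\mathrm{FP}(h_1,h_2)$.
   Context: A flow monoid is a commutative monoid $(\mathbb{M},+,0)$ such that $n\le m :\iff \exists o.\ m=n+o$ is a partial order in which every ascending chain $K$ has a least upper bound $\bigsqcup K$, and $n+\bigsqcup K=\bigsqcup(n+K)$. $\mathcal{C}(\mathbb{M}\to\mathbb{M})$ is the set of functions commuting with least upper bounds of ascending chains. Infinite sums denote least upper bounds of finite partial sums. A flow graph is $h=(X,E,\mathit{in})$ with $X\subseteq\mathbb{N}$ finite, $E:X\times\mathbb{N}\to\mathcal{C}(\mathbb{M}\to\mathbb{M})$, $\mathit{in}:(\mathbb{N}\setminus X)\times X\to\mathbb{M}$; $\mathit{in}_x=\sum_{y\in\mathbb{N}\setminus X}\mathit{in}(y,x)$; the flow $h.\mathit{flow}$ is the least $\mathit{flow}:X\to\mathbb{M}$ with $\mathit{flow}(x)=\mathit{in}_x+\sum_{y\in X}E(y,x)(\mathit{flow}(y))$; the outflow is $h.\mathit{out}(x,y)=E(x,y)(h.\mathit{flow}(x))$ for $x\in X$, $y\notin X$. Transfer function: $\mathsf{tf}(h)(\mathit{in}')$ is the outflow of $(X,E,\mathit{in}')$. $\mathsf{tf}(h_1)=_{\mathit{in}}\mathsf{tf}(h_2)$ means equality on all inflows $\mathit{in}'\le\mathit{in}$ (pointwise). Contextual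 equivalence $h_1\approx h_2$: $h_1.X=h_2.X$, $h_1.\mathit{in}=h_2.\mathit{in}$, $\mathsf{tf}(h_1)=_{h_1.\mathit{in}}\mathsf{tf}(h_2)$. Restriction: for $Y\subseteq\mathbb{N}$, $h|_Y=(X\cap Y,\ E|_{(X\cap Y)\times\mathbb{N}},\ \mathit{in}')$ with $\mathit{in}'(z,y)=\mathit{in}(z,y)$ for $z\notin X$, $y\in X\cap Y$, and $\mathit{in}'(x,y)=E(x,y)(h.\mathit{flow}(x))$ for $x\in X\setminus Y$, $y\in X\cap Y$. Footprints: for $h_1,h_2$ with $X=h_1.X=h_2.X$ and $h_1.\mathit{in}=h_2.\mathit{in}$, $\mathrm{FP}(h_1,h_2)$ is the set of $Y\subseteq X$ such that $h_1|_Y\approx h_2|_Y$ and $h_1|_{X\setminus Y}=h_2|_{X\setminus Y}$. *)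

(* Defs.v *)
From HB Require Import structures.
From mathcomp Require Import all_boot all_order all_algebra.
From mathcomp Require Import finmap.
From Stdlib Require Import ClassicalEpsilon.
Set Implicit Arguments. Unset Strict Implicit. Unset Printing Implicit Defensive.
Import GRing.Theory.
Local Open Scope ring_scope.


Section FlowDefs.
Variable M : nmodType.

Definition fm_le (n m : M) : Prop := exists o : M, m = n + o.

Definition ascending (K : nat -> M) : Prop := forall i, fm_le (K i) (K i.+1).

Definition is_lub (K : nat -> M) (l : M) : Prop :=
  (forall i, fm_le (K i) l) /\ (forall u, (forall i, fm_le (K i) u) -> fm_le l u).

(* the least upper bound (chosen; unique in a flow monoid by antisymmetry) *)
Definition sup (K : nat -> M) : M :=
  epsilon (inhabits (0 : M)) (fun l => is_lub K l).

Definition flow_monoid : Prop :=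
  [/\ (forall n m : M, fm_le n m -> fm_le m n -> n = m),
      (forall K, ascending K -> exists l, is_lub K l) &
      (forall (n : M) K l, ascending K -> is_lub K l ->
          is_lub (fun i => n + K i) (n + l))].

Definition chain_continuous (f : M -> M) : Prop :=
  forall K l, ascending K -> is_lub K l -> is_lub (fun i => f (K i)) (f l).

(* Flow graphs h = (X, E, in).  E and in are total functions; only their
   values on X x N resp. (N \ X) x X are meaningful. *)
Record flow_graph := FlowGraph {
  fg_X : {fset nat};
  fg_E : nat -> nat -> M -> M;
  fg_in : nat -> nat -> M }.

Definition is_flow_graph (h : flow_graph) : Prop :=
  forall x y, x \in fg_X h -> chain_continuous (fg_E h x y).

(* in_x = sum_{y in N \ X} in(y, x), as lub of the finite partial sums *)
Definition inflow (h : flow_graph) (x : nat) : M :=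
  sup (fun n => \sum_(y < n | (y : nat) \notin fg_X h) fg_in h y x).

Definition is_flow_solution (h : flow_graph) (f : nat -> M) : Prop :=
  forall x, x \in fg_X h ->
    f x = inflow h x + \sum_(y <- fg_X h) fg_E h y x (f y).

Definition is_least_flow (h : flow_graph) (f : nat -> M) : Prop :=
  is_flow_solution h f /\
  forall g, is_flow_solution h g -> forall x, x \in fg_X h -> fm_le (f x) (g x).

(* h.flow (only its values on h.X are meaningful) *)
Definition flow (h : flow_graph) : nat -> M :=
  epsilon (inhabits (fun _ : nat => (0 : M))) (fun f => is_least_flow h f).

Definition outflow (h : flow_graph) (x y : nat) : M := fg_E h x y (flow h x).

Definition tf (h : flow_graph) (inp : nat -> nat -> M) : nat -> nat -> M :=
  outflow (FlowGraph (fg_X h) (fg_E h) inp).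

Definition same_in (h1 h2 : flow_graph) : Prop :=
  forall z y, z \notin fg_X h1 -> y \in fg_X h1 -> fg_in h1 z y = fg_in h2 z y.

Definition tf_eq_on (X : {fset nat}) (inp : nat -> nat -> M)
    (h1 h2 : flow_graph) : Prop :=
  forall inp' : nat -> nat -> M,
    (forall z y, z \notin X -> y \in X -> fm_le (inp' z y) (inp z y)) ->
    forall x y, x \in X -> y \notin X -> tf h1 inp' x y = tf h2 inp' x y.

Definition ctx_equiv (h1 h2 : flow_graph) : Prop :=
  [/\ fg_X h1 = fg_X h2, same_in h1 h2 & tf_eq_on (fg_X h1) (fg_in h1) h1 h2].

(* equality of flow graphs (as functions on their domains) *)
Definition graph_eq (h1 h2 : flow_graph) : Prop :=
  [/\ fg_X h1 = fg_X h2,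
      (forall x y m, x \in fg_X h1 -> fg_E h1 x y m = fg_E h2 x y m) &
      same_in h1 h2].

Definition restrict (h : flow_graph) (Y : {fset nat}) : flow_graph :=
  FlowGraph (fg_X h `&` Y)%fset (fg_E h)
    (fun z y => if z \in fg_X h then fg_E h z y (flow h z) else fg_in h z y).

Definition FP (h1 h2 : flow_graph) (Y : {fset nat}) : Prop :=
  [/\ (Y `<=` fg_X h1)%fset,
      ctx_equiv (restrict h1 Y) (restrict h2 Y) &
      graph_eq (restrict h1 (fg_X h1 `\` Y)%fset) (restrict h2 (fg_X h1 `\` Y)%fset)].

End FlowDefs.

(* Main.v *)
Require Import Defs.
From mathcomp Require Import all_boot all_order all_algebra.
From mathcomp Require Import finmap.
From Stdlib Require Import ClassicalEpsilon FunctionalExtensionality PropExtensionality.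
Set Implicit Arguments. Unset Strict Implicit. Unset Printing Implicit Defensive.
Import GRing.Theory.
Local Open Scope fset_scope.
Local Open Scope ring_scope.

Section Aux.
Variable M : nmodType.
Variable HM : flow_monoid M.

Lemma le_refl (a : M) : fm_le a a.
Proof. by exists 0; rewrite addr0. Qed.

Lemma le_trans (a b c : M) : fm_le a b -> fm_le b c -> fm_le a c.
Proof. by move=> [o ->] [p ->]; exists (o + p); rewrite addrA. Qed.

Lemma le_antisym (a b : M) : fm_le a b -> fm_le b a -> a = b.
Proof. by case: HM => H _ _; apply: H. Qed.

Lemma le0 (a : M) : fm_le 0 a.
Proof. by exists a; rewrite add0r. Qed.

Lemma le_add (a b c d : M) : fm_le a b -> fm_le c d -> fm_le (a + c) (b + d).
Proof.
move=> [o ->] [p ->]; exists (o + p).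
by rewrite -!addrA; congr (_ + _); rewrite addrC -!addrA; congr (_ + _); rewrite addrC.
Qed.

Lemma le_eq (a b : M) : a = b -> fm_le a b.
Proof. by move=> ->; apply: le_refl. Qed.

Lemma asc_mono (K : nat -> M) : ascending K -> forall i j, (i <= j)%N -> fm_le (K i) (K j).
Proof.
move=> hK i j /subnK <-; elim: (j - i)%N => [|n IH]; first exact: le_refl.
by rewrite addSn; apply: le_trans IH (hK _).
Qed.

Lemma lub_unique (K : nat -> M) (a b : M) : is_lub K a -> is_lub K b -> a = b.
Proof. by move=> [ua la] [ub lb]; apply: le_antisym; [apply: la | apply: lb]. Qed.

Lemma sup_spec (K : nat -> M) : ascending K -> is_lub K (sup K).
Proof.
move=> hK; rewrite /sup; apply: epsilon_spec.
by case: HM => _ H _; apply: H.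
Qed.

Lemma lub_mono (K L : nat -> M) (k l : M) : (forall i, fm_le (K i) (L i)) -> is_lub K k -> is_lub L l -> fm_le k l.
Proof. by move=> hKL [uk lk] [ul ll]; apply: lk => i; apply: le_trans (hKL i) (ul i). Qed.

Lemma lub_shift (K : nat -> M) (l : M) : ascending K -> is_lub K l -> is_lub (fun n => K n.+1) l.
Proof.
move=> hK [u lu]; split=> [i|v hv]; first exact: u.
apply: lu => -[|i]; last exact: hv.
exact: le_trans (hK 0%N) (hv 0%N).
Qed.

Lemma asc_add (K L : nat -> M) : ascending K -> ascending L -> ascending (fun i => K i + L i).
Proof. by move=> hK hL i; apply: le_add. Qed.

Lemma lub_add (K L : nat -> M) (k l : M) : ascending K -> ascending L -> is_lub K k -> is_lub L l ->
  is_lub (fun i => K i + L i) (k + l).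
Proof.
move=> hK hL [uk lk] [ul ll]; split=> [i|u hu]; first by apply: le_add.
case: HM => _ _ H3.
have hj : forall j, fm_le (K j + l) u.
  move=> j; have [_ L3] := H3 (K j) L l hL (conj ul ll).
  apply: L3 => i; apply: le_trans (hu (maxn i j)).
  apply: le_add; apply: asc_mono => //; [exact: leq_maxr | exact: leq_maxl].
have [_ L3] := H3 l K k hK (conj uk lk).
rewrite addrC; apply: L3 => j; rewrite addrC; exact: hj.
Qed.

Lemma lub_const (c : M) : is_lub (fun _ => c) c.
Proof. by split=> [i|u hu]; [apply: le_refl | apply: hu 0%N]. Qed.

Lemma lub_sum (I : eqType) (s : seq I) (F : I -> nat -> M) (L : I -> M) :
  (forall y, y \in s -> ascending (F y) /\ is_lub (F y) (L y)) ->
  ascending (fun n => \sum_(y <- s) F y n) /\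
  is_lub (fun n => \sum_(y <- s) F y n) (\sum_(y <- s) L y).
Proof.
elim: s => [|a s IH] H.
  split; first by move=> i; rewrite !big_nil; apply: le_refl.
  rewrite big_nil; apply: (@eq_ind _ (fun _ => 0) (fun K => is_lub K 0)); first exact: lub_const.
  by apply: functional_extensionality => n; rewrite big_nil.
have [ha la] := H a (mem_head _ _).
have [hs ls] := IH (fun y hy => H y (mem_behead (s:=a :: s) hy)).
rewrite big_cons.
have -> : (fun n => \sum_(y <- a :: s) F y n) = (fun n => F a n + \sum_(y <- s) F y n).
  by apply: functional_extensionality => n; rewrite big_cons.
split; [exact: asc_add | exact: lub_add].
Qed.

Lemma cont_mono (f : M -> M) (a b : M) : chain_continuous f -> fm_le a b -> fm_le (f a) (f b).
Proof.
move=> hf hab.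
pose K := fun i : nat => if i == 0%N then a else b.
have hK : ascending K by case=> [|i]; rewrite /K //=; apply: le_refl.
have lK : is_lub K b.
  split=> [[|i]|u hu]; rewrite /K /=; [exact: hab | exact: le_refl | exact: hu 1%N].
by have [u _] := hf K b hK lK; apply: (u 0%N).
Qed.

Lemma sum_mono (I : eqType) (s : seq I) (P : pred I) (F G : I -> M) :
  (forall y, y \in s -> P y -> fm_le (F y) (G y)) ->
  fm_le (\sum_(y <- s | P y) F y) (\sum_(y <- s | P y) G y).
Proof.
elim: s => [|a s IH] H; first by rewrite !big_nil; apply: le_refl.
have H' : forall y, y \in s -> P y -> fm_le (F y) (G y).
  by move=> y hy; apply: H; rewrite inE hy orbT.
rewrite !big_cons; case: ifP => hP; last exact: IH.
by apply: le_add; [exact: H (mem_head _ _) hP | exact: IH].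
Qed.

Lemma psum_asc (P : pred nat) (f : nat -> M) : ascending (fun n => \sum_(y < n | P y) f y).
Proof.
move=> n; rewrite /= big_mkcond [X in fm_le _ X]big_mkcond big_ord_recr /=.
by eexists.
Qed.

Definition infl (X : {fset nat}) (inp : nat -> nat -> M) (x : nat) : M :=
  sup (fun n => \sum_(y < n | (y : nat) \notin X) inp y x).

Lemma infl_spec (X : {fset nat}) (inp : nat -> nat -> M) (x : nat) : is_lub (fun n => \sum_(y < n | (y : nat) \notin X) inp y x) (infl X inp x).
Proof. exact: (sup_spec (psum_asc (fun y : nat => y \notin X) (fun y => inp y x))). Qed.

Lemma infl_mono (X : {fset nat}) (inp inp' : nat -> nat -> M) (x : nat) : (forall z, z \notin X -> fm_le (inp z x) (inp' z x)) ->
  fm_le (infl X inp x) (infl X inp' x).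
Proof.
move=> H; apply: lub_mono (infl_spec _ _ _) (infl_spec _ _ _) => n; cbv beta.
apply: sum_mono => y _ hy.
exact: H.
Qed.

Lemma sum_split (S W : {fset nat}) (F : nat -> M) : S `<=` W ->
  \sum_(y <- W) F y = \sum_(y <- W `\` S) F y + \sum_(y <- S) F y.
Proof.
move=> /fsubsetP hSW; rewrite -big_cat; apply: perm_big; apply: uniq_perm.
- exact: fset_uniq.
- rewrite cat_uniq !fset_uniq /= andbT; apply/hasPn => y hy.
  by rewrite !inE /= hy.
move=> y; rewrite mem_cat !inE /=; case hy: (y \in S); first by rewrite orbT (hSW _ hy).
by rewrite orbF.
Qed.

Lemma psum_fset (D : {fset nat}) (c : nat -> M) n :
  (forall y, y \in D -> (y < n)%N) -> \sum_(y < n | (y : nat) \in D) c y = \sum_(y <- D) c y.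
Proof.
move=> hD; rewrite -(big_mkord (fun y => y \in D)) -big_filter.
apply: perm_big; apply: uniq_perm; [exact: filter_uniq (iota_uniq _ _)| exact: fset_uniq|].
move=> y; rewrite mem_filter mem_iota add0n /=; apply/andP/idP => [[]//|hy].
by split => //; rewrite subn0; apply: hD.
Qed.

Lemma infl_split (X0 X1 : {fset nat}) (in0 c : nat -> nat -> M) x : X1 `<=` X0 ->
  infl X1 (fun z y => if z \in X0 then c z y else in0 z y) x =
  infl X0 in0 x + \sum_(z <- X0 `\` X1) c z x.
Proof.
move=> /fsubsetP h10.
set D := X0 `\` X1.
pose A := fun n => \sum_(y < n | (y : nat) \notin X0) in0 y x.
pose B := fun n => \sum_(y < n | (y : nat) \in D) c y x.
have eP : (fun n => \sum_(y < n | (y : nat) \notin X1) (if (y : nat) \in X0 then c y x else in0 y x))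
          = (fun n => A n + B n).
  apply: functional_extensionality => n.
  rewrite (bigID (fun y : 'I_n => (y : nat) \in X0)) /= addrC; congr (_ + _).
    apply: eq_big => y; last by move=> /andP[_ /negbTE ->].
    by apply/andP/idP => [[]//|hy]; split => //; apply: contra hy; apply: h10.
  apply: eq_big => y; last by move=> /andP[_ ->].
  by rewrite /D in_fsetD andbC.
have aA : ascending A := psum_asc (fun y : nat => y \notin X0) (fun y => in0 y x).
have aB : ascending B := psum_asc (fun y : nat => y \in D) (fun y => c y x).
pose N := (\max_(y <- D) y).+1.
have hN : forall y, y \in D -> (y < N)%N by move=> y hy; rewrite ltnS; exact: leq_bigmax_seq.
have eB : forall n, (forall y, y \in D -> (y < n)%N) -> B n = \sum_(z <- D) c z x.
  by move=> n h; exact: psum_fset.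
have lB : is_lub B (\sum_(z <- D) c z x).
  split=> [i|u hu].
    apply: le_trans (asc_mono aB (leq_maxl i N)) _.
    rewrite eB; first exact: le_refl.
    by move=> y /hN h; apply: leq_trans h (leq_maxr _ _).
  by have := hu N; rewrite eB.
have := lub_add aA aB (infl_spec X0 in0 x) lB.
rewrite -/A -/B -eP => hl.
exact: lub_unique (infl_spec _ _ _) hl.
Qed.


Definition Fop (h : flow_graph M) (f : nat -> M) (x : nat) : M :=
  inflow h x + \sum_(y <- fg_X h) fg_E h y x (f y).

Lemma Fop_mono (h : flow_graph M) (f g : nat -> M) : is_flow_graph h ->
  (forall y, y \in fg_X h -> fm_le (f y) (g y)) -> forall x, fm_le (Fop h f x) (Fop h g x).
Proof.
move=> hh hfg x; apply: le_add; first exact: le_refl.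
by apply: sum_mono => y hy _; apply: cont_mono (hh _ _ hy) (hfg _ hy).
Qed.

Lemma flow_least (h : flow_graph M) : is_flow_graph h ->
  is_flow_solution h (flow h) /\
  forall g, (forall x, x \in fg_X h -> fm_le (Fop h g x) (g x)) ->
    forall x, x \in fg_X h -> fm_le (flow h x) (g x).
Proof.
move=> hh.
pose it := fun n => iter n (Fop h) (fun _ => 0).
have asc : forall x, ascending (fun n => it n x).
  move=> x n; elim: n x => [|n IH] x; first exact: le0.
  by apply: Fop_mono => // y _; apply: IH.
pose l := fun x => sup (fun n => it n x).
have ll : forall x, is_lub (fun n => it n x) (l x) by move=> x; apply: sup_spec.
have fix_l : forall x, Fop h l x = l x.
  move=> x; apply: (lub_unique (K := fun n => it n.+1 x)); last exact: (lub_shift (asc x) (ll x)).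
  have [a1 l1] := lub_sum (s := fg_X h) (F := fun y n => fg_E h y x (it n y))
      (L := fun y => fg_E h y x (l y)) (fun y hy => conj
        (fun n => cont_mono (hh _ _ hy) (asc y n))
        (hh _ _ hy _ _ (asc y) (ll y))).
  case: HM => _ _ H3.
  exact: H3 (inflow h x) _ _ a1 l1.
have least : forall g, (forall x, x \in fg_X h -> fm_le (Fop h g x) (g x)) ->
    forall x, x \in fg_X h -> fm_le (l x) (g x).
  move=> g hg x hx; have [_ L] := ll x; apply: L => n.
  elim: n x hx => [|n IH] x hx; first exact: le0.
  apply: le_trans (hg x hx); exact: Fop_mono.
have sol : is_least_flow h l.
  split; first by move=> x hx; rewrite -[LHS]fix_l.
  move=> g hg; apply: least => x hx; by apply: le_eq; rewrite [RHS](hg x hx).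
have hf : is_least_flow h (flow h) := epsilon_spec _ (fun f => is_least_flow h f) (ex_intro _ l sol).
split; first exact: hf.1.
move=> g hg x hx; apply: le_trans (least g hg x hx).
exact: hf.2 l sol.1 x hx.
Qed.


Lemma flow_ext (h h' : flow_graph M) : fg_X h = fg_X h' ->
  (forall y z m, y \in fg_X h -> fg_E h y z m = fg_E h' y z m) ->
  (forall z y, z \notin fg_X h -> y \in fg_X h -> fg_in h z y = fg_in h' z y) ->
  flow h = flow h'.
Proof.
move=> hX hE hin.
have hinf : forall x, x \in fg_X h -> inflow h x = inflow h' x.
  move=> x hx; rewrite /inflow -hX; congr sup; apply: functional_extensionality => n.
  by apply: eq_bigr => y hy; apply: hin.
have hsum : forall f x, \sum_(y <- fg_X h) fg_E h y x (f y) = \sum_(y <- fg_X h') fg_E h' y x (f y).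
  by move=> f x; rewrite -hX; apply: eq_big_seq => y hy; apply: hE.
have hsol : forall f, is_flow_solution h f <-> is_flow_solution h' f.
  move=> f; split => H x hx.
    by rewrite -hX in hx; rewrite -hinf // -hsum; apply: H.
  by rewrite hinf // hsum; apply: H; rewrite -hX.
rewrite /flow; f_equal; apply: functional_extensionality => f.
apply: propositional_extensionality; rewrite /is_least_flow; split.
  move=> [s l]; split; first by apply/hsol.
  by move=> g /hsol hg x; rewrite -hX; apply: l.
move=> [s l]; split; first by apply/hsol.
by move=> g /hsol hg x; rewrite hX; apply: l.
Qed.

Lemma restrict_flow (h : flow_graph M) (S : {fset nat}) : is_flow_graph h -> S `<=` fg_X h ->
  forall x, x \in S ->
  flow (FlowGraph S (fg_E h)
    (fun z y => if z \in fg_X h then fg_E h z y (flow h z) else fg_in h z y)) x = flow h x.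
Proof.
move=> hh hS.
set R := FlowGraph S _ _.
have hR : is_flow_graph R by move=> x y hx; apply: hh; apply: (fsubsetP hS).
have [solh leh] := flow_least hh; have [solR leR] := flow_least hR.
have infR : forall x, inflow R x = inflow h x + \sum_(z <- fg_X h `\` S) fg_E h z x (flow h z).
  move=> x; exact: (infl_split (fg_in h) (fun z y => fg_E h z y (flow h z)) x hS).
have a : forall x, x \in S -> fm_le (flow R x) (flow h x).
  apply: leR => x hx; apply: le_eq.
  rewrite /Fop infR -addrA -sum_split //; symmetry; apply: solh.
  exact: (fsubsetP hS).
pose g := fun z => if z \in S then flow R z else flow h z.
have b : forall x, x \in fg_X h -> fm_le (flow h x) (g x).
  apply: leh => x hx.
  have hs : \sum_(y <- fg_X h) fg_E h y x (g y) =
     \sum_(y <- fg_X h `\` S) fg_E h y x (flow h y) + \sum_(y <- S) fg_E h y x (flow R y).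
    rewrite (sum_split _ hS); congr (_ + _); apply: eq_big_seq => y hy; rewrite /g.
      by move: hy; rewrite in_fsetD => /andP[/negbTE -> _].
    by rewrite hy.
  rewrite /g; case: ifP => hxS.
    apply: le_eq; rewrite /Fop hs addrA -infR (solR x hxS) //.
  rewrite (solh x hx); apply: Fop_mono => // y hy; rewrite /g; case: ifP => hyS.
    exact: a.
  exact: le_refl.
move=> x hx; apply: le_antisym; first exact: a.
by have := b x (fsubsetP hS x hx); rewrite /g hx.
Qed.

Lemma flow_mono (X : {fset nat}) (E : nat -> nat -> M -> M) (inp inp' : nat -> nat -> M) :
  is_flow_graph (FlowGraph X E inp) ->
  (forall z y, z \notin X -> y \in X -> fm_le (inp z y) (inp' z y)) ->
  forall x, x \in X -> fm_le (flow (FlowGraph X E inp) x) (flow (FlowGraph X E inp') x).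
Proof.
move=> hh hle.
have hh' : is_flow_graph (FlowGraph X E inp') by [].
have [_ le] := flow_least hh; have [sol' _] := flow_least hh'.
apply: le => x hx; rewrite [X in fm_le _ X](sol' x hx); apply: le_add; last exact: le_refl.
by apply: infl_mono => z hz; apply: hle.
Qed.


Lemma dir (W S : {fset nat}) (Ei Ej : nat -> nat -> M -> M) (inp : nat -> nat -> M) :
  (forall x y, x \in W -> chain_continuous (Ei x y)) ->
  (forall x y, x \in W -> chain_continuous (Ej x y)) ->
  S `<=` W ->
  (forall y z m, y \in W -> y \notin S -> Ei y z m = Ej y z m) ->
  (forall y z, y \in S -> z \notin S ->
     Ei y z (flow (FlowGraph S Ei (fun z y => if z \in W then Ei z y (flow (FlowGraph W Ei inp) z) else inp z y)) y)
   = Ej y z (flow (FlowGraph S Ej (fun z y => if z \in W then Ei z y (flow (FlowGraph W Ei inp) z) else inp z y)) y)) ->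
  forall z, z \in W -> z \notin S ->
    fm_le (flow (FlowGraph W Ej inp) z) (flow (FlowGraph W Ei inp) z).
Proof.
move=> cEi cEj hS hE htf.
set Gi := FlowGraph W Ei inp; set Gj := FlowGraph W Ej inp.
set inpi := fun z y => if z \in W then Ei z y (flow Gi z) else inp z y.
set Kj := FlowGraph S Ej inpi.
have hGi : is_flow_graph Gi by [].
have hGj : is_flow_graph Gj by [].
have hKj : is_flow_graph Kj by move=> x y hx; apply: cEj; apply: (fsubsetP hS).
have rK : forall x, x \in S -> flow (FlowGraph S Ei inpi) x = flow Gi x := restrict_flow hGi hS.
have infK : forall x, inflow Kj x = inflow Gi x + \sum_(z <- W `\` S) Ei z x (flow Gi z).
  move=> x; exact: (infl_split inp (fun z y => Ei z y (flow Gi z)) x hS).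
have [solGi _] := flow_least hGi; have [_ leGj] := flow_least hGj.
have [solKj _] := flow_least hKj.
pose g := fun z => if z \in S then flow Kj z else flow Gi z.
have hg : forall x, x \in W -> fm_le (flow Gj x) (g x).
  apply: leGj => x hx.
  have hs : \sum_(y <- W) Ej y x (g y) =
     \sum_(y <- W `\` S) Ei y x (flow Gi y) + \sum_(y <- S) Ej y x (flow Kj y).
    rewrite (sum_split _ hS); congr (_ + _); apply: eq_big_seq => y hy; rewrite /g.
      move: hy; rewrite in_fsetD => /andP[hyS hyW].
      by rewrite (negbTE hyS) hE.
    by rewrite hy.
  apply: le_eq; rewrite /Fop /= hs /g; case: ifP => hxS.
    by rewrite addrA -infK (solKj x hxS).
  rewrite (solGi x hx) (sum_split _ hS) !addrA; congr (_ + _).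
  apply: eq_big_seq => y hy; rewrite -rK //; symmetry; exact: (htf y x hy (negbT hxS)).
move=> z hz hzS; have := hg z hz; rewrite /g (negbTE hzS) //.
Qed.

End Aux.

Theorem lemma3 (M : nmodType) (HM : flow_monoid M)
    (h1 h2 : flow_graph M) :
  is_flow_graph h1 -> is_flow_graph h2 ->
  fg_X h1 = fg_X h2 -> same_in h1 h2 ->
  forall Z Y : {fset nat},
    FP h1 h2 Z -> Z `<=` Y -> Y `<=` fg_X h1 -> FP h1 h2 Y.
Proof.
case: h1 => X E1 in1; case: h2 => X2 E2 in2 /= hh1 hh2 hX; subst X2.
move=> hin Z Y [hZX ctxZ [_ hEZ hinZ']] hZY hYX.
have hA : forall x y m, x \in X -> x \notin Z -> E1 x y m = E2 x y m.
  by move=> x y m hx hxZ; apply: hEZ; rewrite /= in_fsetI in_fsetD hx hxZ.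
have hB : forall x, x \in X -> x \notin Z ->
    flow (FlowGraph X E1 in1) x = flow (FlowGraph X E2 in2) x.
  move=> x hx hxZ.
  have hx' : x \in X `&` (X `\` Z) by rewrite in_fsetI in_fsetD hx hxZ.
  have e1 : flow (restrict (FlowGraph X E1 in1) (X `\` Z)) x = flow (FlowGraph X E1 in1) x :=
    restrict_flow HM hh1 (fsubsetIl _ _) hx'.
  have e2 : flow (restrict (FlowGraph X E2 in2) (X `\` Z)) x = flow (FlowGraph X E2 in2) x :=
    restrict_flow HM hh2 (fsubsetIl _ _) hx'.
  rewrite -e1 -e2; congr (_ x); apply: flow_ext => //.
pose h1 := FlowGraph X E1 in1; pose h2 := FlowGraph X E2 in2.
have sameY : same_in (restrict h1 Y) (restrict h2 Y).
  move=> z y /= hz hy; case hzX: (z \in X).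
    have hzY : z \notin Y by move: hz; rewrite in_fsetI hzX.
    have hzZ : z \notin Z by apply: contra hzY; apply: (fsubsetP hZY).
    by rewrite hA // hB.
  by apply: hin; [rewrite hzX | move: hy; rewrite in_fsetI => /andP[]].
split => //; last first.
  split => //=.
    by move=> x y m; rewrite in_fsetI in_fsetD => /andP[hx /andP[hxY _]]; apply: hA => //;
      apply: contra hxY; apply: (fsubsetP hZY).
  move=> z y /= hz hy; case hzX: (z \in X); last first.
    by apply: hin; [rewrite hzX | move: hy; rewrite in_fsetI => /andP[]].
  have hyX : y \in X by move: hy; rewrite in_fsetI => /andP[].
  have hyY : y \notin Y by move: hy; rewrite in_fsetI in_fsetD => /andP[_ /andP[]].
  have hyZ : y \notin Z by apply: contra hyY; apply: (fsubsetP hZY).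
  case hzZ: (z \in Z); last by rewrite hA ?hzZ // hB ?hzZ.
  have := hinZ' z y; rewrite /= hzX; apply.
    by rewrite in_fsetI in_fsetD hzZ andbF.
  by rewrite in_fsetI in_fsetD hyX hyZ.
split => //.
move=> inp' hle x y hx hy; rewrite /tf /outflow /=.
case: ctxZ => _ hsZ htfZ.
pose W := X `&` Y; pose S := X `&` Z.
have hSW : S `<=` W.
  apply/fsubsetP => z; rewrite !in_fsetI => /andP[-> hz] /=; exact: (fsubsetP hZY).
pose G1 := FlowGraph W E1 inp'; pose G2 := FlowGraph W E2 inp'.
have hG1 : is_flow_graph G1 by move=> a b; rewrite in_fsetI => /andP[ha _]; apply: hh1.
have hG2 : is_flow_graph G2 by move=> a b; rewrite in_fsetI => /andP[ha _]; apply: hh2.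
have C1 : forall z, z \in W -> fm_le (flow G1 z) (flow h1 z).
  move=> z hz; apply: le_trans (flow_mono HM hG1 hle hz) _.
  apply: le_eq; exact: (restrict_flow HM hh1 (fsubsetIl X Y) hz).
have hle2 : forall z y, z \notin W -> y \in W -> fm_le (inp' z y) (fg_in (restrict h2 Y) z y).
  by move=> z y' hz hy'; rewrite -sameY //; apply: hle.
have C2 : forall z, z \in W -> fm_le (flow G2 z) (flow h2 z).
  move=> z hz; apply: le_trans (flow_mono HM hG2 hle2 hz) _.
  apply: le_eq; exact: (restrict_flow HM hh2 (fsubsetIl X Y) hz).
pose inp1 := fun z y => if z \in W then E1 z y (flow G1 z) else inp' z y.
pose inp2 := fun z y => if z \in W then E2 z y (flow G2 z) else inp' z y.
have inWX : forall z, z \in W -> z \in X by move=> z; rewrite in_fsetI => /andP[].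
have bnd1 : forall z y, z \notin S -> y \in S -> fm_le (inp1 z y) (fg_in (restrict h1 Z) z y).
  move=> z y' hz hy'; rewrite /inp1; case: ifP => hzW.
    by rewrite /= (inWX _ hzW); apply: cont_mono (hh1 _ _ (inWX _ hzW)) (C1 _ hzW).
  by apply: hle; [rewrite hzW | exact: (fsubsetP hSW)].
have bnd2 : forall z y, z \notin S -> y \in S -> fm_le (inp2 z y) (fg_in (restrict h1 Z) z y).
  move=> z y' hz hy'; rewrite /inp2; case: ifP => hzW.
    rewrite (hsZ z y' hz hy') /= (inWX _ hzW).
    by apply: cont_mono (hh2 _ _ (inWX _ hzW)) (C2 _ hzW).
  by apply: hle; [rewrite hzW | exact: (fsubsetP hSW)].
have hEW : forall y z m, y \in W -> y \notin S -> E1 y z m = E2 y z m.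
  move=> a b m ha haS; apply: hA; first exact: inWX.
  by move: haS; rewrite in_fsetI (inWX _ ha).
have d12 := dir HM (Ei := E1) (Ej := E2) (inp := inp')
  (fun a b ha => hh1 a b (inWX _ ha)) (fun a b ha => hh2 a b (inWX _ ha)) hSW hEW
  (fun a b ha hb => htfZ inp1 bnd1 a b ha hb).
have d21 := dir HM (Ei := E2) (Ej := E1) (inp := inp')
  (fun a b ha => hh2 a b (inWX _ ha)) (fun a b ha => hh1 a b (inWX _ ha)) hSW
  (fun a b m ha hb => esym (hEW a b m ha hb))
  (fun a b ha hb => esym (htfZ inp2 bnd2 a b ha hb)).
have HMf : forall z, z \in W -> z \notin S -> flow G1 z = flow G2 z.
  move=> z hz hzS; apply: (le_antisym HM); [apply: d21 | apply: d12] => //.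
have hyS : y \notin S by apply: contra hy; apply: (fsubsetP hSW).
case hxS: (x \in S); last first.
  rewrite hEW ?hxS //; congr (E2 x y); exact: HMf (negbT hxS).
rewrite -(restrict_flow HM hG1 hSW hxS) -(restrict_flow HM hG2 hSW hxS).
have -> : flow (FlowGraph S (fg_E G2)
    (fun z y => if z \in fg_X G2 then fg_E G2 z y (flow G2 z) else fg_in G2 z y))
   = flow (FlowGraph S E2 inp1).
  apply: flow_ext => //= z b hz hb; rewrite /inp1; case: ifP => hzW //.
  by rewrite hEW ?HMf.
exact: (htfZ inp1 bnd1 x y hxS hyS).
Qed.
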